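(* For positive integers $n,a,b$ and a nonnegative integer $c$, $M_n(a,b,c)=M_n(b,a,c)$.
   Context: $$M_n(a,b,c):=\operatorname{CT}_x\prod_{i=1}^n(1-x_i)^{-b}x_i^{-a+1}\prod_{1\le i<j\le n}(x_j-x_i)^{-c},$$ where $\operatorname{CT}_x=\operatorname{CT}_{x_n}\cdots\operatorname{CT}_{x_1}$ is iterated constant-term extraction, $(1-x_i)^{-b}$ is expanded as a power series in $x_i$, and for $i<j$, $(x_j-x_i)^{-c}=x_j^{-c}(1-x_i/x_j)^{-c}$ is expanded as a power series in $x_i/x_j$. *)

(* Defs.v *)
From mathcomp Require Import all_boot all_algebra.
Set Implicit Arguments. Unset Strict Implicit. Unset Printing Implicit Defensive.
Import GRing.Theory Num.Theory.

(* Full formal expansion of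
     prod_i (1-x_i)^{-b} x_i^{-a+1} prod_{i<j} (x_j-x_i)^{-c}
   with (1-x_i)^{-b} = sum_m 'C(b+m-1,m) x_i^m and
   (x_j-x_i)^{-c} = x_j^{-c} sum_k 'C(c+k-1,k) (x_i/x_j)^k.
   A monomial of the expansion is indexed by m : variables -> nat and
   k : pairs (i,j), i<j -> nat (k p = 0 forced for p.1 >= p.2).
   Indices are 0-based: variable x_{i+1} <-> i : 'I_n. *)

Definition ct_coef (n b c B : nat) (m : {ffun 'I_n -> 'I_B})
    (k : {ffun 'I_n * 'I_n -> 'I_B}) : nat :=
  (\prod_(i < n) 'C(b + m i - 1, m i)) *
  (\prod_(p : 'I_n * 'I_n | (p.1 < p.2)%N) 'C(c + k p - 1, k p)).

Definition ct_expo (n a c B : nat) (m : {ffun 'I_n -> 'I_B})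
    (k : {ffun 'I_n * 'I_n -> 'I_B}) (i : 'I_n) : int :=
  ((m i)%:Z + 1 - a%:Z
   + \sum_(j < n | (i < j)%N) (k (i, j) : nat)%:Z
   - \sum_(j < n | (j < i)%N) (c%:Z + (k (j, i) : nat)%:Z))%R.

Definition ct_const (n a c B : nat) (m : {ffun 'I_n -> 'I_B})
    (k : {ffun 'I_n * 'I_n -> 'I_B}) : bool :=
  [forall p : 'I_n * 'I_n, (p.1 < p.2)%N || (k p == 0 :> nat)] &&
  [forall i : 'I_n, ct_expo a c m k i == 0%R].

Definition ct_box (n a b c B : nat) : nat :=
  \sum_(m : {ffun 'I_n -> 'I_B}) \sum_(k : {ffun 'I_n * 'I_n -> 'I_B})
     (if ct_const a c m k then ct_coef b c m k else 0).

(* The set of constant monomials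
   is finite: from the exponent equations solved successively for
   x_1, x_2, ..., every index is <= (2^n + n) * (a + n*c), so the box
   bound below contains the whole support (it is symmetric in a, b only
   for convenience; any larger bound gives the same value). *)
Definition M (n a b c : nat) : nat :=
  ct_box n a b c ((2 ^ n + n) * (a + b + n * c)).+1.

(* Main.v *)
Require Import Defs.
From mathcomp Require Import all_boot all_algebra.
From mathcomp Require Import mpoly.
From mathcomp Require Import zify ring.
Set Implicit Arguments. Unset Strict Implicit. Unset Printing Implicit Defensive.
Import GRing.Theory Num.Theory.
Local Open Scope ring_scope.

Section Trunc.
Variable n : nat.
Notation P := {mpoly int[n]}.
Implicit Types p q : P.

Definition eqm (N : nat) p q := forall m : 'X_{1..n}, (mdeg m <= N)%N -> p@_m = q@_m.
Definition hi (d : nat) p := forall m : 'X_{1..n}, (mdeg m < d)%N -> p@_m = 0.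

Lemma eqm_refl N p : eqm N p p. Proof. by []. Qed.
Lemma eqm_sym N p q : eqm N p q -> eqm N q p.
Proof. by move=> h m hm; rewrite h. Qed.
Lemma eqm_trans N p q r : eqm N p q -> eqm N q r -> eqm N p r.
Proof. by move=> h1 h2 m hm; rewrite h1 // h2. Qed.
Lemma eqmD N p p' q q' : eqm N p p' -> eqm N q q' -> eqm N (p + q) (p' + q').
Proof. by move=> h1 h2 m hm; rewrite !mcoeffD h1 // h2. Qed.
Lemma eqmN N p p' : eqm N p p' -> eqm N (- p) (- p').
Proof. by move=> h m hm; rewrite !mcoeffN h. Qed.
Lemma eqmB N p p' q q' : eqm N p p' -> eqm N q q' -> eqm N (p - q) (p' - q').
Proof. by move=> h1 h2; apply: eqmD => //; apply: eqmN. Qed.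

Lemma mdeg_le_add (m m1 m2 : 'X_{1..n}) : m = (m1 + m2)%MM -> (mdeg m1 <= mdeg m)%N.
Proof. by move=> ->; rewrite mdegD leq_addr. Qed.

Lemma eqmMl N p p' q : eqm N p p' -> eqm N (p * q) (p' * q).
Proof.
move=> h m hm; rewrite !mcoeffM; apply: eq_bigr => k /eqP e.
by rewrite h // (leq_trans (mdeg_le_add e)).
Qed.
Lemma eqmM N p p' q q' : eqm N p p' -> eqm N q q' -> eqm N (p * q) (p' * q').
Proof.
move=> h1 h2; apply: (eqm_trans (eqmMl q h1)).
by rewrite ![p' * _]mulrC; apply: eqmMl.
Qed.
Lemma eqmX N p p' k : eqm N p p' -> eqm N (p ^+ k) (p' ^+ k).
Proof. by move=> h; elim: k => [|k ih]; rewrite ?expr0 // !exprS; apply: eqmM. Qed.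
Lemma eqm_prod N (I : Type) (r : seq I) (Pr : pred I) (F G : I -> P) :
  (forall i, Pr i -> eqm N (F i) (G i)) ->
  eqm N (\prod_(i <- r | Pr i) F i) (\prod_(i <- r | Pr i) G i).
Proof. by move=> h; apply: big_ind2 => //; apply: eqmM. Qed.
Lemma eqm_sum N (I : Type) (r : seq I) (Pr : pred I) (F G : I -> P) :
  (forall i, Pr i -> eqm N (F i) (G i)) ->
  eqm N (\sum_(i <- r | Pr i) F i) (\sum_(i <- r | Pr i) G i).
Proof. by move=> h; apply: big_ind2 => //; apply: eqmD. Qed.

Lemma hi0 p : hi 0 p. Proof. by []. Qed.
Lemma hi_le d d' p : (d' <= d)%N -> hi d p -> hi d' p.
Proof. by move=> le h m hm; apply: h; apply: leq_trans le. Qed.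
Lemma hiM d1 d2 p q : hi d1 p -> hi d2 q -> hi (d1 + d2) (p * q).
Proof.
move=> h1 h2 m hm; rewrite mcoeffM big1 // => k /eqP e.
have hk : (mdeg k.1 + mdeg k.2 < d1 + d2)%N by rewrite -mdegD -e.
case: (ltnP (mdeg k.1) d1) => [lt1|ge1]; first by rewrite h1 // mul0r.
rewrite h2 ?mulr0 //; rewrite -(ltn_add2l (mdeg k.1)); apply: (leq_trans hk).
by rewrite leq_add2r.
Qed.
Lemma hiMl d p q : hi d q -> hi d (p * q).
Proof. by move=> h; have := hiM (hi0 p) h; rewrite add0n. Qed.
Lemma hiMr d p q : hi d p -> hi d (p * q).
Proof. by move=> h; rewrite mulrC; apply: hiMl. Qed.
Lemma hiX (m0 : 'X_{1..n}) : hi (mdeg m0) 'X_[m0].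
Proof. by move=> m hm; rewrite mcoeffX; case: eqP => // e; rewrite e ltnn in hm. Qed.
Lemma hiXn d p k : hi d p -> hi (d * k) (p ^+ k).
Proof.
move=> h; elim: k => [|k ih]; first by rewrite muln0; apply: hi0.
by rewrite exprS mulnS; apply: hiM.
Qed.
Lemma hiD d p q : hi d p -> hi d q -> hi d (p + q).
Proof. by move=> h1 h2 m hm; rewrite mcoeffD h1 // h2 // addr0. Qed.
Lemma hiN d p : hi d p -> hi d (- p).
Proof. by move=> h m hm; rewrite mcoeffN h // oppr0. Qed.
Lemma hi_eqm0 N p : hi N.+1 p -> eqm N p 0.
Proof. by move=> h m hm; rewrite mcoeff0 h. Qed.

Lemma eqm_inv_uniq N A X Y : eqm N (A * X) 1 -> eqm N (A * Y) 1 -> eqm N X Y.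
Proof.
move=> hX hY.
have e1 : eqm N X (X * (A * Y)) by rewrite -{1}(mulr1 X); apply: eqmM => //; apply: eqm_sym.
apply: (eqm_trans e1); rewrite mulrA (mulrC X).
by rewrite -{2}(mul1r Y); apply: eqmMl.
Qed.

Lemma geom_step (c B : nat) (Z : P) : (0 < B)%N ->
  (1 - Z) * \sum_(k < B) ('C(c + k, k))%:R * Z ^+ k =
  \sum_(k < B) ('C(c + k - 1, k))%:R * Z ^+ k - ('C(c + B.-1, B.-1))%:R * Z ^+ B.
Proof.
case: B => // B _; elim: B => [|B ih].
  by rewrite !big_ord1 /= !bin0 !mul1r expr0 expr1 mulr1.
rewrite big_ord_recr /= mulrDr ih [in RHS]big_ord_recr /=.
have pas : ('C(c + B.+1, B.+1) = 'C(c + B.+1 - 1, B.+1) + 'C(c + B, B))%N.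
  by rewrite addnS subn1 /= binS.
rewrite pas natrD.
set x := 'C(c + B, B)%:R; set y := 'C(c + B.+1 - 1, B.+1)%:R.
set s := \sum_(i < B.+1) _.
rewrite !exprS; ring.
Qed.

Lemma geomL N B c (Z : P) : hi 1 Z -> (N < B)%N ->
  eqm N ((1 - Z) ^+ c * \sum_(k < B) ('C(c + k - 1, k))%:R * Z ^+ k) 1.
Proof.
move=> hZ hB; elim: c => [|c ih].
  rewrite expr0 mul1r; case: B hB => // B _.
  rewrite big_ord_recl /= bin0 mul1r expr0 big1 ?addr0 // => i _.
  by rewrite add0n /bump /= add1n subn1 /= bin_small // mul0r.
have -> : \sum_(k < B) ('C(c.+1 + k - 1, k))%:R * Z ^+ k = \sum_(k < B) ('C(c + k, k))%:R * Z ^+ k :> P.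
  by apply: eq_bigr => k _; rewrite addSn subn1.
rewrite exprSr -mulrA geom_step; last by lia.
rewrite mulrBr; apply: (@eqm_trans _ _ ((1 - Z) ^+ c * (\sum_(k < B) ('C(c + k - 1, k))%:R * Z ^+ k) - 0)).
  apply: eqmB => //; apply: hi_eqm0; apply: hiMl; apply: hiMl.
  by apply: (@hi_le (1 * B)); [rewrite mul1n | exact: hiXn].
by rewrite subr0.
Qed.


Definition um (i : nat) : 'X_{1..n} := [multinom ((i <= l)%N : nat) | l < n].
Definition rm (i j : nat) : 'X_{1..n} := [multinom (((i <= l) && (l < j))%N : nat) | l < n].

Lemma rm_um i j : (i < j)%N -> (rm i j + um j)%MM = um i.
Proof.
move=> h; apply/mnmP => l; rewrite mnmDE !mnmE.
by case: (leqP i l) => a1; case: (leqP j l) => a2 /=; rewrite ?addn0 ?add0n //; lia.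
Qed.

Lemma mdeg_ge (m : 'X_{1..n}) (l : 'I_n) : (m l <= mdeg m)%N.
Proof. by rewrite mdegE (bigD1 l) //= leq_addr. Qed.

Lemma um_pos (i : 'I_n) : (0 < mdeg (um i))%N.
Proof. by apply: leq_trans (mdeg_ge _ i); rewrite mnmE leqnn. Qed.

Lemma rm_pos (i j : 'I_n) : (i < j)%N -> (0 < mdeg (rm i j))%N.
Proof. by move=> h; apply: leq_trans (mdeg_ge _ i); rewrite mnmE leqnn h. Qed.

Definition U (i : nat) : P := 'X_[um i].
Definition Rh (i j : nat) : P := 'X_[rm i j].
Definition Ginv (N : nat) (x : P) : P := \sum_(m < N.+1) (- x) ^+ m.

Lemma GinvK N (m0 : 'X_{1..n}) : (0 < mdeg m0)%N ->
  eqm N ((1 + 'X_[m0]) * Ginv N 'X_[m0]) 1.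
Proof.
move=> h.
have e : (1 + 'X_[m0]) * Ginv N 'X_[m0] = 1 - (- 'X_[m0]) ^+ N.+1.
  have h1 := subrX1 (- 'X_[m0] : P) N.+1; rewrite /Ginv.
  have -> : 1 + 'X_[m0] = - (- 'X_[m0] - 1) :> P by rewrite opprB opprK addrC.
  by rewrite mulNr -h1 opprB.
rewrite e -{2}(subr0 1); apply: eqmB => //; apply: hi_eqm0.
rewrite exprNn; apply: hiMl.
have h2 := hiXn (k:=N.+1) (@hiX m0).
apply: (hi_le _ h2); by rewrite -{1}(mul1n N.+1) leq_mul2r h orbT.
Qed.

Lemma pair_id N B c (i j : 'I_n) : (i < j)%N -> (N < B)%N ->
  eqm N (\sum_(k < B) ('C(c + k - 1, k))%:R * Rh i j ^+ k *
           ((1 + U j) ^+ k * Ginv N (U i) ^+ (k + c)))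
        (\sum_(k < B) ('C(c + k - 1, k))%:R * Rh i j ^+ k).
Proof.
move=> hij hB.
have hR : hi 1 (Rh i j) by apply: (@hi_le (mdeg (rm i j))); [exact: rm_pos | exact: hiX].
apply: (@eqm_inv_uniq N ((1 - Rh i j) ^+ c)); last by apply: geomL.
set G := Ginv N (U i); set Z := Rh i j * ((1 + U j) * G).
have eS : \sum_(k < B) ('C(c + k - 1, k))%:R * Rh i j ^+ k * ((1 + U j) ^+ k * G ^+ (k + c))
   = (\sum_(k < B) ('C(c + k - 1, k))%:R * Z ^+ k) * G ^+ c.
  rewrite mulr_suml; apply: eq_bigr => k _; rewrite /Z !exprMn exprD.
  by rewrite !mulrA.
rewrite eS.
have hZ : hi 1 Z by apply: hiMr.
have hG : eqm N (G * (1 + U i)) 1 by rewrite mulrC; apply: GinvK; apply: um_pos.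
have eRU : Rh i j * U j = U i by rewrite /Rh /U -mpolyXD rm_um.
have e1 : eqm N ((1 - Z) * (1 + U i)) (1 - Rh i j).
  have -> : (1 - Z) * (1 + U i) = (1 + U i) - Rh i j * (1 + U j) * (G * (1 + U i)).
    by rewrite /Z; ring.
  have -> : 1 - Rh i j = (1 + U i) - Rh i j * (1 + U j) * 1.
    by rewrite mulr1 mulrDr mulr1 eRU; ring.
  by apply: eqmB => //; apply: eqmM.
apply: (@eqm_trans _ _ (((1 - Z) ^+ c * (\sum_(k < B) ('C(c + k - 1, k))%:R * Z ^+ k)) * ((G * (1 + U i)) ^+ c))).
  apply: (@eqm_trans _ _ (((1 - Z) * (1 + U i)) ^+ c * ((\sum_(k < B) ('C(c + k - 1, k))%:R * Z ^+ k) * G ^+ c))).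
    by apply: eqmMl; apply: eqmX; apply: eqm_sym.
  rewrite !exprMn; set A := (1 - Z) ^+ c; set Bq := (1 + U i) ^+ c.
  set Sq := \sum_(k < B) _; set Gc := G ^+ c.
  have -> : A * Bq * (Sq * Gc) = A * Sq * (Gc * Bq) by ring.
  exact: eqm_refl.
apply: (@eqm_trans _ _ (1 * 1 ^+ c)); last by rewrite expr1n mulr1.
apply: eqmM; first exact: geomL.
by apply: eqmX.
Qed.

Definition T (p : {poly int}) (u : P) : P := (map_poly (@mpolyC n int) p).[u].

Lemma TM (p q : {poly int}) (u : P) : T (p * q) u = T p u * T q u.
Proof. by rewrite /T rmorphM hornerM. Qed.
Lemma TD (p q : {poly int}) (u : P) : T (p + q) u = T p u + T q u.
Proof. by rewrite /T rmorphD hornerD. Qed.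
Lemma TN (p : {poly int}) (u : P) : T (- p) u = - T p u.
Proof. by rewrite /T rmorphN hornerN. Qed.
Lemma T1 (u : P) : T 1 u = 1.
Proof. by rewrite /T rmorph1 hornerC. Qed.
Lemma TX (u : P) : T 'X u = u.
Proof. by rewrite /T map_polyX hornerX. Qed.
Lemma TXn (p : {poly int}) k (u : P) : T (p ^+ k) u = T p u ^+ k.
Proof. by elim: k => [|k ih]; rewrite ?expr0 ?T1 // !exprS TM ih. Qed.
Lemma T_sum (I : Type) (r : seq I) (Pr : pred I) (F : I -> {poly int}) (u : P) :
  T (\sum_(i <- r | Pr i) F i) u = \sum_(i <- r | Pr i) T (F i) u.
Proof.
have T0 : T 0 u = 0 by rewrite /T rmorph0 horner0.
elim: r => [|x r ih]; first by rewrite !big_nil.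
by rewrite !big_cons; case: (Pr x); rewrite ?TD ih.
Qed.

Lemma mpolyC_inj' : injective (@mpolyC n int).
Proof. by move=> x y e; have := congr1 (mcoeff 0%MM) e; rewrite !mcoeffC eqxx !mulr1. Qed.

Lemma TE (p : {poly int}) (u : P) L : (size p <= L)%N ->
  T p u = \sum_(i < L) (p`_i)%:MP * u ^+ i.
Proof.
move=> h; rewrite /T (@horner_coef_wide _ L); last first.
  by rewrite size_map_inj_poly //; exact: mpolyC_inj'.
by apply: eq_bigr => i _; rewrite coef_map.
Qed.

Definition Gp (N : nat) : {poly int} := \sum_(m < N.+1) (- 'X) ^+ m.

Lemma T_Gp N (u : P) : T (Gp N) u = Ginv N u.
Proof. by rewrite /Gp T_sum; apply: eq_bigr => i _; rewrite TXn TN TX. Qed.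

End Trunc.

Lemma coefXD1 (z D : nat) : ((('X + 1) ^+ z : {poly int})`_D = ('C(z, D))%:R)%R.
Proof.
elim: z D => [|z ih] D.
  by case: D => [|D]; rewrite expr0 coef1 ?bin0 // bin0n.
rewrite exprSr mulrDr mulr1 coefD coefMX ih.
case: D => [|D]; rewrite /= ih ?bin0 ?add0r //.
by rewrite binS natrD addrC.
Qed.

Lemma Xpow_shift (K y : nat) (s : {poly int}) :
  exists r : {poly int}, (1 + 'X^K * s) ^+ y = 1 + 'X^K * r.
Proof.
elim: y => [|y [r er]]; first by exists 0; rewrite expr0 mulr0 addr0.
exists (r + s + 'X^K * r * s); rewrite exprS er; ring.
Qed.

Lemma coef_Pp (N x y D : nat) : (y <= x)%N -> (D <= N)%N ->
  ((('X + 1) ^+ x * Gp N ^+ y)`_D = ('C(x - y, D))%:R :> int)%R.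
Proof.
move=> hyx hD.
have e0 : ('X + 1) * Gp N = 1 + 'X^(N.+1) * (- (-1) ^+ N.+1) :> {poly int}.
  have h1 := subrX1 (- 'X : {poly int}) N.+1; rewrite /Gp.
  have -> : 'X + 1 = - (- 'X - 1) :> {poly int} by rewrite opprB opprK addrC.
  by rewrite mulNr -h1 opprB [(- 'X) ^+ _]exprNn mulrN mulrC.
have [r er] := Xpow_shift N.+1 y (- (-1) ^+ N.+1).
rewrite -{1}(subnK hyx) exprD -mulrA -exprMn e0 er mulrDr mulr1 coefD.
rewrite mulrA (mulrC _ 'X^(N.+1)) -mulrA mulrC coefMXn.
by rewrite ltnS hD addr0 coefXD1.
Qed.



Lemma PoszS (I : Type) (r : seq I) (Pr : pred I) (F : I -> nat) :
  (((\sum_(i <- r | Pr i) F i)%N : int) = \sum_(i <- r | Pr i) (F i : int))%R.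
Proof.
elim: r => [|x r ih]; first by rewrite !big_nil.
by rewrite !big_cons; case: (Pr x); rewrite ?PoszD ih.
Qed.

Lemma prod_bool_nat (I : finType) (b : I -> bool) :
  (\prod_i ((b i)%:R : int) = ([forall i, b i])%:R)%R.
Proof.
case: (boolP [forall i, b i]) => [/forallP h|/forallPn [j hj]].
  by rewrite big1 // => i _; rewrite h.
by rewrite (bigD1 j) //= (negbTE hj) mul0r.
Qed.

Section Comb.
Variables (n c : nat).

Definition isp (p : 'I_n * 'I_n) : bool := (p.1 < p.2)%N.
Definition gw (p : 'I_n * 'I_n) (j : nat) : int :=
  if isp p then ('C(c + j - 1, j))%:R else (j == 0%N)%:R.

Definition Dk (a : nat) (kf : 'I_n * 'I_n -> nat) (i : 'I_n) : int :=
  (a%:Z - 1 + \sum_(j < n | (j < i)%N) (c%:Z + (kf (j, i))%:Z)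
     - \sum_(j < n | (i < j)%N) (kf (i, j))%:Z)%R.

Definition FP (p : {poly int}) (D : int) : int :=
  if (0 <= D)%R then p`_(`|D|%N) else 0.

Definition gam (a : nat) : 'X_{1..n} :=
  (\sum_(i < n) @um n i *+ (a.-1 + \sum_(j < n | (j < i)%N) c))%MM.

Definition mu (kf : 'I_n * 'I_n -> nat) : 'X_{1..n} :=
  (\sum_(q : 'I_n * 'I_n) @rm n q.1 q.2 *+ kf q)%MM.

Lemma psum0 (f : 'I_n -> int) :
  (forall l : 'I_n, \sum_(i < n | (i <= l)%N) f i = 0) -> forall i, f i = 0.
Proof.
move=> h.
suff H : forall t (i : 'I_n), (i : nat) = t -> f i = 0 by move=> i; exact: H.
elim/ltn_ind => t ih i ei.
have := h i; rewrite (bigD1 i) //= big1 ?addr0 // => j /andP [hj1 hj2].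
apply: (ih j) => //; rewrite -ei ltn_neqAle hj1 andbT.
by apply: contra hj2 => /eqP e; apply/eqP/val_inj.
Qed.

Lemma KI (kf : 'I_n * 'I_n -> nat) (l : 'I_n) :
  ((\sum_(q : 'I_n * 'I_n) ((q.1 <= l) && (l < q.2))%N * kf q)
   + \sum_(i < n | (i <= l)%N) \sum_(j < n | (j < i)%N) kf (j, i)
   = \sum_(i < n | (i <= l)%N) \sum_(j < n | (i < j)%N) kf (i, j))%N.
Proof.
rewrite !pair_big_dep /=.
rewrite [X in (_ + X)%N](reindex_inj (h := fun q : 'I_n * 'I_n => (q.2, q.1))) /=; last first.
  by case=> x1 y1 [] x2 y2 /= [-> ->].
rewrite [X in (_ + X)%N]big_mkcond [RHS]big_mkcond -big_split /=.
apply: eq_bigr => -[x y] _ /=.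
case: (leqP x l) => h1; case: (ltnP l y) => h2; case: (ltnP x y) => h3;
  case: (leqP y l) => h4 /=; rewrite ?mul1n ?mul0n ?addn0 ?add0n //; lia.
Qed.
Lemma mu_l kf (l : 'I_n) :
  mu kf l = (\sum_(q : 'I_n * 'I_n) ((q.1 <= l) && (l < q.2))%N * kf q)%N.
Proof. by rewrite /mu mnm_sumE; apply: eq_bigr => q _; rewrite mulmnE mnmE mulnC. Qed.

Lemma sumum_l (f : 'I_n -> nat) (l : 'I_n) :
  (\sum_(i < n) @um n i *+ f i)%MM l = (\sum_(i < n | (i <= l)%N) f i)%N.
Proof.
rewrite mnm_sumE [RHS]big_mkcond /=; apply: eq_bigr => i _.
by rewrite mulmnE mnmE; case: (i <= l)%N; rewrite ?mul1n ?mul0n.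
Qed.

Definition inn (kf : 'I_n * 'I_n -> nat) (i : 'I_n) := (\sum_(j < n | (j < i)%N) kf (j, i))%N.
Definition outn (kf : 'I_n * 'I_n -> nat) (i : 'I_n) := (\sum_(j < n | (i < j)%N) kf (i, j))%N.

Lemma DkE a kf i : (0 < a)%N ->
  Dk a kf i = ((a.-1 + \sum_(j < n | (j < i)%N) c + inn kf i)%N%:Z - (outn kf i)%:Z)%R.
Proof.
move=> ha; rewrite /Dk /inn /outn big_split /= !PoszS !PoszD.
have -> : (a%:Z - 1 = (a.-1)%:Z)%R by rewrite -{1}(prednK ha) -addn1 PoszD addrK.
by rewrite !PoszS addrA.
Qed.

Lemma coordid a kf (m : 'I_n -> nat) (l : 'I_n) : (0 < a)%N ->
  (((mu kf + \sum_(i < n) @um n i *+ m i)%MM l)%:Z - (gam a l)%:Z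
   = \sum_(i < n | (i <= l)%N) ((m i)%:Z - Dk a kf i))%R.
Proof.
move=> ha; rewrite mnmDE sumum_l /gam sumum_l mu_l.
rewrite (eq_bigr (fun i => ((m i + outn kf i)%N%:Z - (a.-1 + \sum_(j < n | (j < i)%N) c + inn kf i)%N%:Z)%R)); last first.
  by move=> i _; rewrite DkE // PoszD; ring.
rewrite sumrB -!PoszS !big_split /= !PoszD.
have K : ((\sum_(q : 'I_n * 'I_n) ((q.1 <= l) && (l < q.2))%N * kf q)%N
   + \sum_(i < n | (i <= l)%N) inn kf i = \sum_(i < n | (i <= l)%N) outn kf i)%N := KI kf l.
have K2 := congr1 Posz K; rewrite PoszD in K2.
rewrite -K2; ring.
Qed.

Lemma MonoEq a kf (m : 'I_n -> nat) : (0 < a)%N ->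
  ((mu kf + \sum_(i < n) @um n i *+ m i)%MM == gam a) = [forall i, (m i)%:Z == Dk a kf i].
Proof.
move=> ha; apply/idP/idP.
  move/eqP => e; apply/forallP => i; rewrite -subr_eq0; apply/eqP; move: i.
  apply: psum0 => l; rewrite -coordid // e subrr //.
move/forallP => h; apply/eqP/mnmP => l; apply/eqP; rewrite -eqz_nat -subr_eq0 coordid //.
by rewrite big1 // => i _; apply/eqP; rewrite subr_eq0; apply: h.
Qed.

Lemma SumUnique L (f : 'I_n -> nat -> int) (D : 'I_n -> int) :
  \sum_(m : {ffun 'I_n -> 'I_L}) (\prod_i f i (m i)) * ([forall i, (m i)%:Z == D i])%:R
  = \prod_i (if (0 <= D i) && (`|D i|%N < L)%N then f i `|D i|%N else 0).
Proof.
have e : forall i, (if (0 <= D i) && (`|D i|%N < L)%N then f i `|D i|%N else 0)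
   = \sum_(j : 'I_L) f i j * (((j : nat) : int) == D i)%:R.
  move=> i; case: ifP => [/andP [h0 hL] | hn].
    have eD : ((`|D i|%N%N : int) = D i) by rewrite abszE ger0_norm.
    rewrite (bigD1 (Ordinal hL)) //= eD eqxx mulr1 big1 ?addr0 // => j hj.
    case: eqP => [ej|]; last by rewrite mulr0.
    case/eqP: hj; apply: val_inj => /=; apply/eqP; rewrite -eqz_nat ej eD //.
  rewrite big1 // => j _; case: eqP => [ej|]; last by rewrite mulr0.
  exfalso; move: hn; rewrite -ej absz_nat ltn_ord andbT; by [].
rewrite (eq_bigr _ (fun i _ => e i)) bigA_distr_bigA /=; apply: eq_bigr => m _.
by rewrite big_split /= prod_bool_nat.
Qed.

Lemma Xsum (I : Type) (r : seq I) (Pr : pred I) (F : I -> 'X_{1..n}) :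
  \prod_(i <- r | Pr i) ('X_[F i] : {mpoly int[n]}) = 'X_[\sum_(i <- r | Pr i) F i].
Proof.
elim: r => [|x r ih]; first by rewrite !big_nil mpolyX0.
by rewrite !big_cons; case: (Pr x); rewrite ?mpolyXD ih.
Qed.

Lemma PK a kf (Ps : 'I_n -> {poly int}) L : (0 < a)%N -> (forall i, size (Ps i) <= L)%N ->
  ('X_[mu kf] * \prod_(i < n) T (Ps i) (U n i))@_(gam a) = \prod_(i < n) FP (Ps i) (Dk a kf i).
Proof.
move=> ha hL.
rewrite (eq_bigr (fun i => \sum_(j < L) ((Ps i)`_j)%:MP * U n i ^+ j)); last first.
  by move=> i _; apply: TE.
rewrite bigA_distr_bigA /= mulr_sumr raddf_sum /=.
rewrite [RHS](eq_bigr (fun i => if (0 <= Dk a kf i) && (`|Dk a kf i|%N < L)%N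
                                then (Ps i)`_(`|Dk a kf i|%N) else 0)); last first.
  move=> i _; rewrite /FP; case: (0 <= Dk a kf i) => //=.
  case: ltnP => // h; rewrite nth_default //; apply: leq_trans (hL i) h.
rewrite -(@SumUnique L (fun i j => (Ps i)`_j) (fun i => Dk a kf i)); apply: eq_bigr => m _.
rewrite big_split /= -rmorph_prod.
rewrite (eq_bigr (fun i : 'I_n => 'X_[@um n i *+ m i])); last by move=> i _; rewrite /U mpolyXn.
rewrite Xsum mulrCA -mpolyXD mcoeffCM mcoeffX MonoEq // eq_sym.
Qed.

Definition Ssum (B a : nat) (p : {poly int}) : int :=
  \sum_(k : {ffun 'I_n * 'I_n -> 'I_B})
     (\prod_(q : 'I_n * 'I_n) gw q (k q)) * \prod_(i < n) FP p (Dk a (fun q => (k q : nat)) i).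

End Comb.


Definition Hp (b B : nat) : {poly int} := \poly_(m < B) ('C(b + m - 1, m))%:R.

Lemma expoE n a c B (m : {ffun 'I_n -> 'I_B}) (k : {ffun 'I_n * 'I_n -> 'I_B}) i :
  ct_expo a c m k i = ((m i : nat)%:Z - Dk c a (fun q => (k q : nat)) i)%R.
Proof. by rewrite /ct_expo /Dk; ring. Qed.

Lemma PoszP (I : Type) (r : seq I) (Pr : pred I) (F : I -> nat) :
  (((\prod_(i <- r | Pr i) F i)%N : int) = \prod_(i <- r | Pr i) (F i : int))%R.
Proof.
elim: r => [|x r ih]; first by rewrite !big_nil.
by rewrite !big_cons; case: (Pr x); rewrite ?PoszM ih.
Qed.

Lemma Link n a b c B : (0 < a)%N -> (0 < b)%N ->
  (ct_box n a b c B)%:Z = Ssum n c B a (Hp b B).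
Proof.
move=> ha hb.
rewrite /ct_box PoszS; under eq_bigr do rewrite PoszS.
rewrite exchange_big /Ssum; apply: eq_bigr => k _.
case: (boolP [forall p : 'I_n * 'I_n, (p.1 < p.2)%N || (k p == 0 :> nat)]) => hk; last first.
  rewrite big1; last by move=> m _; rewrite /ct_const (negbTE hk).
  move/forallPn: hk => [p hp]; rewrite (bigD1 p) //= /gw /isp.
  by move: hp; rewrite negb_or => /andP [/negbTE -> /negbTE ->]; rewrite !mul0r.
have -> : \prod_(q : 'I_n * 'I_n) gw c q (k q) = (\prod_(p : 'I_n * 'I_n | (p.1 < p.2)%N) 'C(c + k p - 1, k p))%N%:Z.
  rewrite [LHS](bigID (@isp n)) /= [X in _ * X]big1 ?mulr1; last first.
    move=> q /negbTE hq; rewrite /gw hq; move/forallP: hk => /(_ q); move: hq; rewrite /isp => -> /= /eqP ->.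
    by [].
  rewrite PoszP; apply: eq_bigr => q hq; rewrite /gw hq natz //.
under eq_bigr => m _ do rewrite /ct_const hk /= /ct_coef.
set K := (\prod_(p : 'I_n * 'I_n | (p.1 < p.2)%N) 'C(c + k p - 1, k p))%N.
rewrite (eq_bigr (fun m : {ffun 'I_n -> 'I_B} => K%:Z * ((\prod_i ('C(b + m i - 1, m i))%:Z)
    * ([forall i, (m i : nat)%:Z == Dk c a (fun q => (k q : nat)) i])%:R))); last first.
  move=> m _.
  have -> : [forall i, ct_expo a c m k i == 0] = [forall i, (m i : nat)%:Z == Dk c a (fun q => (k q : nat)) i].
    by apply: eq_forallb => i; rewrite expoE subr_eq0.
  case: [forall i, _]; last by rewrite mulr0n !mulr0.
  by rewrite mulr1 PoszM PoszP mulrC.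
rewrite -mulr_sumr; congr (_ * _).
rewrite (@SumUnique n B (fun i j => ('C(b + j - 1, j))%:Z) (fun i => Dk c a (fun q => (k q : nat)) i)).
apply: eq_bigr => i _; rewrite /FP /Hp coef_poly.
by case: (0 <= _) => //=; case: ltnP => //; rewrite natz.
Qed.


Section Star.
Variables (n c : nat).
Notation P := {mpoly int[n]}.

Lemma LinK B a (V : {ffun 'I_n * 'I_n -> 'I_B} -> P) :
  \sum_(k : {ffun 'I_n * 'I_n -> 'I_B}) (\prod_q gw c q (k q)) * ('X_[mu (fun q => (k q : nat))] * V k)@_(gam n c a)
  = (\sum_(k : {ffun 'I_n * 'I_n -> 'I_B})
       (\prod_q ((gw c q (k q))%:MP * Rh n q.1 q.2 ^+ (k q))) * V k)@_(gam n c a).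
Proof.
rewrite raddf_sum; apply: eq_bigr => k _ /=.
rewrite big_split /= -rmorph_prod -mulrA mcoeffCM; congr (_ * _).
congr (_ * _)@_(_); rewrite /mu -Xsum; apply: eq_bigr => q _.
by rewrite /Rh mpolyXn.
Qed.

Lemma mdeg_sumX (I : Type) (r : seq I) (Pr : pred I) (F : I -> 'X_{1..n}) :
  mdeg (\sum_(i <- r | Pr i) F i)%MM = (\sum_(i <- r | Pr i) mdeg (F i))%N.
Proof.
elim: r => [|x r ih]; first by rewrite !big_nil mdeg0.
by rewrite !big_cons; case: (Pr x); rewrite ?mdegD ih.
Qed.

Lemma degD a (kf : 'I_n * 'I_n -> nat) : (0 < a)%N -> (forall i, 0 <= Dk c a kf i) ->
  forall i, (`|Dk c a kf i|%N <= mdeg (gam n c a))%N.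
Proof.
move=> ha h i.
have e : ((mu kf + \sum_(i < n) @um n i *+ `|Dk c a kf i|%N)%MM == gam n c a).
  rewrite MonoEq //; apply/forallP => j; rewrite abszE ger0_norm //.
rewrite -(eqP e) mdegD mdeg_sumX.
apply: leq_trans (leq_addl _ _); rewrite (bigD1 i) //= mdegD mdegMn.
apply: leq_trans (leq_addr _ _); rewrite -{1}(muln1 `|_|%N) mulnC leq_mul2r.
by rewrite um_pos orbT.
Qed.

Definition yv (kf : 'I_n * 'I_n -> nat) (i : 'I_n) := (\sum_(j < n | (i < j)%N) (kf (i, j) + c))%N.
Definition Fq N (q : 'I_n * 'I_n) (j : nat) : P :=
  Rh n q.1 q.2 ^+ j * (if isp q then (1 + U n q.2) ^+ j * Ginv N (U n q.1) ^+ (j + c) else 1).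

Lemma regroup N e (g : 'I_n * 'I_n -> int) (kf : 'I_n * 'I_n -> nat) :
  (\prod_q ((g q)%:MP * Rh n q.1 q.2 ^+ kf q)) *
    \prod_(i < n) ((1 + U n i) ^+ (e + inn kf i) * Ginv N (U n i) ^+ (yv kf i))
  = (\prod_q ((g q)%:MP * Fq N q (kf q))) * \prod_(i < n) (1 + U n i) ^+ e.
Proof.
have h1 : \prod_q ((g q)%:MP * Fq N q (kf q)) = (\prod_q ((g q)%:MP * Rh n q.1 q.2 ^+ kf q)) *
   \prod_q (if isp q then (1 + U n q.2) ^+ (kf q) * Ginv N (U n q.1) ^+ (kf q + c) else 1).
  by rewrite -big_split; apply: eq_bigr => q _; rewrite /Fq mulrA.
rewrite h1 -mulrA; congr (_ * _).
rewrite -big_mkcond.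
have h2 : \prod_(q | isp q) (1 + U n q.2) ^+ (kf q) = \prod_(i < n) (1 + U n i) ^+ (inn kf i).
  rewrite /inn; under [RHS]eq_bigr do rewrite -prodrXr.
  rewrite pair_big_dep /=.
  rewrite (reindex_inj (h := fun q : 'I_n * 'I_n => (q.2, q.1))) /=; last first.
    by case=> x1 y1 [] x2 y2 /= [-> ->].
  by apply: eq_big => -[x y].
have h3 : \prod_(q | isp q) Ginv N (U n q.1) ^+ (kf q + c) = \prod_(i < n) Ginv N (U n i) ^+ (yv kf i).
  rewrite /yv; under [RHS]eq_bigr do rewrite -prodrXr.
  rewrite pair_big_dep /=.
  by apply: eq_big => -[x y].
rewrite !big_split /= h2 h3.
under eq_bigr do rewrite exprD.
rewrite big_split /=; ring.
Qed.

Definition Ppk N e (kf : 'I_n * 'I_n -> nat) (i : 'I_n) : {poly int} :=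
  ('X + 1) ^+ (e + inn kf i) * Gp N ^+ (yv kf i).

Lemma PerK a b e B (kf : 'I_n * 'I_n -> nat) : (0 < a)%N -> (0 < b)%N ->
  (mdeg (gam n c a) < B)%N ->
  (forall i : 'I_n, e + 2 = a + b + \sum_(j < n | (j < i)%N) c + \sum_(j < n | (i < j)%N) c)%N ->
  \prod_(i < n) FP (Hp b B) (Dk c a kf i) =
  \prod_(i < n) FP (Ppk (mdeg (gam n c a)) e kf i) (Dk c a kf i).
Proof.
move=> ha hb hB He.
case: (boolP [forall i, 0 <= Dk c a kf i]) => [/forallP hD | /forallPn [j hj]]; last first.
  by rewrite (bigD1 j) //= [RHS](bigD1 j) //= /FP (negbTE hj) !mul0r.
apply: eq_bigr => i _.
have hi := degD ha hD i.
rewrite /FP (hD i) /Hp coef_poly.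
set d := `|Dk c a kf i|%N.
have ed : (d : int) = Dk c a kf i by rewrite /d abszE ger0_norm.
move: ed; rewrite DkE // => ed.
have ed' : (a.-1 + \sum_(j < n | (j < i)%N) c + inn kf i = outn kf i + d)%N.
  by apply/eqP; rewrite -eqz_nat; apply/eqP; rewrite [in RHS]PoszD ed; ring.
have ey : (yv kf i = outn kf i + \sum_(j < n | (i < j)%N) c)%N by rewrite /yv big_split.
have hdB : (d < B)%N by apply: leq_ltn_trans hB.
rewrite hdB /Ppk coef_Pp //; last by rewrite ey; have := He i; lia.
congr ((_ : nat)%:R); congr 'C(_, _); rewrite ey; have := He i; lia.
Qed.

Lemma size_le_sum (F : 'I_n -> {poly int}) i : (size (F i) <= \sum_(j < n) size (F j))%N.
Proof. by rewrite (bigD1 i) //= leq_addr. Qed.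

Lemma TPpk N e kf i : T (Ppk N e kf i) (U n i) = (1 + U n i) ^+ (e + inn kf i) * Ginv N (U n i) ^+ (yv kf i).
Proof. by rewrite /Ppk TM !TXn TD TX T1 T_Gp addrC. Qed.

Lemma Star a b e B : (0 < a)%N -> (0 < b)%N ->
  (mdeg (gam n c a) < B)%N ->
  (forall i : 'I_n, e + 2 = a + b + \sum_(j < n | (j < i)%N) c + \sum_(j < n | (i < j)%N) c)%N ->
  Ssum n c B a (Hp b B) = Ssum n c B a (('X + 1) ^+ e).
Proof.
move=> ha hb hB He.
set N := mdeg (gam n c a).
rewrite /Ssum.
transitivity (\sum_(k : {ffun 'I_n * 'I_n -> 'I_B}) (\prod_q gw c q (k q)) *
   ('X_[mu (fun q => (k q : nat))] * \prod_(i < n) T (Ppk N e (fun q => (k q : nat)) i) (U n i))@_(gam n c a)).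
  apply: eq_bigr => k _; congr (_ * _).
  rewrite (PerK _ ha hb hB He) (@PK n c a (fun q => (k q : nat)) (fun i => Ppk N e (fun q => (k q : nat)) i)
     (\sum_(j < n) size (Ppk N e (fun q => (k q : nat)) j)) ha) //.
  by move=> i; apply: (size_le_sum (fun j => Ppk N e (fun q => (k q : nat)) j)).
rewrite LinK.
under eq_bigr => k _ do rewrite (eq_bigr _ (fun i _ => TPpk N e (fun q => (k q : nat)) i)) regroup.
rewrite -mulr_suml.
rewrite -(bigA_distr_bigA (fun (q : 'I_n * 'I_n) (j : 'I_B) => (gw c q j)%:MP * Fq N q j)).
transitivity (((\prod_(q : 'I_n * 'I_n) \sum_(j : 'I_B) (gw c q j)%:MP * Rh n q.1 q.2 ^+ j)
   * \prod_(i < n) (1 + U n i) ^+ e)@_(gam n c a)).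
  apply: eqmMl; last exact: leqnn.
  apply: eqm_prod => q _.
  rewrite /Fq /gw; case: (boolP (isp q)) => hq.
    have h := @pair_id n N B c q.1 q.2 hq hB.
    apply: (eqm_trans _ (eqm_trans h _)) => m _.
      by congr (mcoeff m _); apply: eq_bigr => j _; rewrite mpolyC_nat mulrA.
    by congr (mcoeff m _); apply: eq_bigr => j _; rewrite mpolyC_nat.
  by move=> m _; congr (mcoeff m _); apply: eq_bigr => j _; rewrite mulr1.
rewrite bigA_distr_bigA mulr_suml.
rewrite -(@LinK B a (fun _ => \prod_(i < n) (1 + U n i) ^+ e)).
apply: eq_bigr => k _; congr (_ * _).
rewrite (eq_bigr (fun i : 'I_n => T (('X + 1) ^+ e) (U n i))); last first.
  by move=> i _; rewrite TXn TD TX T1 addrC.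
rewrite (@PK n c a (fun q => (k q : nat)) (fun i => ('X + 1) ^+ e) (size (('X + 1) ^+ e : {poly int})) ha) //.
Qed.

End Star.


Section Rev.
Variables (n c : nat).

Definition sgm (q : 'I_n * 'I_n) : 'I_n * 'I_n := (rev_ord q.2, rev_ord q.1).
Lemma sgmK : involutive sgm.
Proof. by case=> x y; rewrite /sgm /= !rev_ordK. Qed.
Lemma sgm_inj : injective sgm. Proof. exact: inv_inj sgmK. Qed.

Lemma isp_sgm q : isp (sgm q) = isp q.
Proof.
case: q => x y; rewrite /isp /sgm /=.
have := ltn_ord x; have := ltn_ord y; move=> hx hy.
apply/idP/idP => h; lia.
Qed.

Lemma rev_lt (i j : 'I_n) : (rev_ord j < rev_ord i)%N = (i < j)%N.
Proof. by rewrite /=; have := ltn_ord i; have := ltn_ord j => hi hj; apply/idP/idP => h; lia. Qed.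

Lemma Dk_rev a b e (kf : 'I_n * 'I_n -> nat) (i : 'I_n) : (0 < a)%N -> (0 < b)%N ->
  (e + 2 = a + b + \sum_(j < n | (j < i)%N) c + \sum_(j < n | (i < j)%N) c)%N ->
  Dk c a (fun q => kf (sgm q)) (rev_ord i) = (e : int) - Dk c b kf i.
Proof.
move=> ha hb He.
rewrite /Dk /sgm /=.
rewrite (reindex_inj rev_ord_inj) /=.
rewrite [X in _ - X](reindex_inj rev_ord_inj) /=.
rewrite (eq_bigl (fun j : 'I_n => (i < j)%N)); last by move=> j; rewrite rev_lt.
rewrite [X in _ - X](eq_bigl (fun j : 'I_n => (j < i)%N)); last by move=> j; rewrite rev_lt.
have e1 : \sum_(j < n | (i < j)%N) (kf (rev_ord (rev_ord i), rev_ord (rev_ord j)) : int) = \sum_(j < n | (i < j)%N) (kf (i, j) : int).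
  by apply: eq_bigr => j _; rewrite !rev_ordK.
have e2 : \sum_(j < n | (j < i)%N) (kf (rev_ord (rev_ord j), rev_ord (rev_ord i)) : int) = \sum_(j < n | (j < i)%N) (kf (j, i) : int).
  by apply: eq_bigr => j _; rewrite !rev_ordK.
rewrite !big_split /= e1 e2.
have He' := congr1 Posz He; rewrite !PoszD !PoszS in He'.
have -> : (e : int) = a%:Z + b%:Z + (\sum_(j < n | (j < i)%N) (c : int)) + (\sum_(j < n | (i < j)%N) (c : int)) - 2.
  by rewrite -He'; ring.
ring.
Qed.

Lemma FP_sym e (D : int) : FP (('X + 1) ^+ e) ((e : int) - D) = FP (('X + 1) ^+ e) D.
Proof.
rewrite /FP !coefXD1.
case: D => d.
  rewrite le0z_nat; case: (leqP d e) => h.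
    by rewrite subzn // le0z_nat absz_nat bin_sub.
  have -> : (e : int) - (d : int) = - ((d - e)%N : int) by rewrite -subzn ?(ltnW h) // opprB.
  have -> : (0 <= - ((d - e)%N : int)) = false.
    by rewrite oppr_ge0 lez_nat; apply/negbTE; rewrite -ltnNge subn_gt0.
  by rewrite bin_small.
rewrite NegzE opprK.
have -> : (0 <= (e : int) + (d.+1 : int)) = true by rewrite -PoszD le0z_nat.
by rewrite -PoszD absz_nat bin_small //; lia.
Qed.

Lemma Dk_ext a (kf1 kf2 : 'I_n * 'I_n -> nat) i : (forall q, kf1 q = kf2 q) ->
  Dk c a kf1 i = Dk c a kf2 i.
Proof.
move=> h.
have e1 : \sum_(j < n | (j < i)%N) ((c : int) + (kf1 (j, i) : int)) = \sum_(j < n | (j < i)%N) ((c : int) + (kf2 (j, i) : int)).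
  by apply: eq_bigr => j _; rewrite h.
have e2 : \sum_(j < n | (i < j)%N) (kf1 (i, j) : int) = \sum_(j < n | (i < j)%N) (kf2 (i, j) : int).
  by apply: eq_bigr => j _; rewrite h.
by rewrite /Dk e1 e2.
Qed.

Lemma Rev a b e B : (0 < a)%N -> (0 < b)%N ->
  (forall i : 'I_n, e + 2 = a + b + \sum_(j < n | (j < i)%N) c + \sum_(j < n | (i < j)%N) c)%N ->
  Ssum n c B a (('X + 1) ^+ e) = Ssum n c B b (('X + 1) ^+ e).
Proof.
move=> ha hb He.
rewrite /Ssum (reindex_inj (h := fun k : {ffun 'I_n * 'I_n -> 'I_B} => [ffun q => k (sgm q)])); last first.
  move=> k1 k2 e12; apply/ffunP => q; have := congr1 (fun f : {ffun 'I_n * 'I_n -> 'I_B} => f (sgm q)) e12.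
  by rewrite /= !ffunE sgmK.
apply: eq_bigr => k _; congr (_ * _).
  rewrite [RHS](reindex_inj sgm_inj); apply: eq_bigr => q _; rewrite ffunE /gw isp_sgm //.
rewrite (reindex_inj rev_ord_inj); apply: eq_bigr => i _.
rewrite (@Dk_ext a _ (fun q => (k (sgm q) : nat))); last by move=> q; rewrite ffunE.
by rewrite (Dk_rev (fun q => (k q : nat)) ha hb (He i)) FP_sym.
Qed.

End Rev.


Lemma LR n c (i : 'I_n) :
  (\sum_(j < n | (j < i)%N) c + \sum_(j < n | (i < j)%N) c = n.-1 * c)%N.
Proof.
have h1 : (\sum_(j < n) c = n * c)%N by rewrite sum_nat_const card_ord.
rewrite (bigD1 i) //= (bigID (fun j : 'I_n => (j < i)%N)) /= in h1.
have e1 : (\sum_(j < n | (j != i) && (j < i)%N) c = \sum_(j < n | (j < i)%N) c)%N.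
  apply: eq_bigl => j; case: (ltnP j i) => h; rewrite ?andbT ?andbF //.
  by apply/eqP => e; rewrite e ltnn in h.
have e2 : (\sum_(j < n | (j != i) && ~~ (j < i)%N) c = \sum_(j < n | (i < j)%N) c)%N.
  apply: eq_bigl => j; rewrite -leqNgt; apply/idP/idP.
    by case/andP => g1 g2; rewrite ltn_neqAle g2 andbT eq_sym.
  by move=> h; rewrite (ltnW h) andbT; apply/eqP => e; rewrite e ltnn in h.
rewrite e1 e2 in h1.
have hn : (0 < n)%N by apply: leq_ltn_trans (ltn_ord i).
have hnc : (n * c = c + n.-1 * c)%N by rewrite -mulSn prednK.
lia.
Qed.

Lemma sq_le n : (n * n <= 2 ^ n + n)%N.
Proof.
have h2 : forall m, (m.*2 <= 2 ^ m)%N.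
  elim=> [|m ih] //; rewrite expnS doubleS.
  have := expn_gt0 2 m; rewrite /= => hp; lia.
elim: n => [|m ih] //; rewrite expnS.
have := h2 m; lia.
Qed.

Lemma mdeg_um n (i : nat) : (mdeg (@um n i) <= n)%N.
Proof.
rewrite mdegE; apply: leq_trans (_ : (\sum_(l < n) 1 <= n)%N); last by rewrite sum_nat_const card_ord muln1.
by apply: leq_sum => l _; rewrite mnmE; case: (i <= l)%N.
Qed.

Lemma gam_bound n c x y : (mdeg (gam n c x) < ((2 ^ n + n) * (x + y + n * c)).+1)%N.
Proof.
rewrite ltnS /gam mdeg_sumX.
apply: (@leq_trans (\sum_(i < n) (n * (x + n * c)))%N).
  apply: leq_sum => i _; rewrite mdegMn; apply: leq_mul; first exact: mdeg_um.
  have : (\sum_(j < n | (j < i)%N) c <= n * c)%N.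
    apply: (@leq_trans (\sum_(j < n) c)); last by rewrite sum_nat_const card_ord.
    by rewrite [X in (_ <= X)%N](bigID (fun j : 'I_n => (j < i)%N)) /= leq_addr.
  lia.
rewrite sum_nat_const card_ord mulnA.
apply: leq_mul; first exact: sq_le.
lia.
Qed.

Theorem corollary4p1 (n a b c : nat) :
  (0 < n)%N -> (0 < a)%N -> (0 < b)%N -> M n a b c = M n b a c.
Proof.
move=> hn ha hb; apply/eqP; rewrite -eqz_nat; apply/eqP.
rewrite /M (addnC b a).
set B := ((2 ^ n + n) * (a + b + n * c)).+1.
set e := (a + b - 2 + n.-1 * c)%N.
have He : forall i : 'I_n, (e + 2 = a + b + \sum_(j < n | (j < i)%N) c + \sum_(j < n | (i < j)%N) c)%N.
  by move=> i; rewrite -addnA LR /e; lia.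
have He' : forall i : 'I_n, (e + 2 = b + a + \sum_(j < n | (j < i)%N) c + \sum_(j < n | (i < j)%N) c)%N.
  by move=> i; rewrite (addnC b a); apply: He.
have hBa : (mdeg (gam n c a) < B)%N by apply: gam_bound.
have hBb : (mdeg (gam n c b) < B)%N by rewrite /B (addnC a b); apply: gam_bound.
rewrite !Link //.
rewrite (@Star n c a b e B ha hb hBa He) (@Rev n c a b e B ha hb He).
by rewrite (@Star n c b a e B hb ha hBb He').
Qed.
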